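(* In the setting described in the context, apply to the phase space variables $(P,Q)=(p_1,p_2,p_3,q_1,q_2,q_3)\in(\mathbb{R}^2)^6$ of the charged three-body problem the following successive changes of variables: (1) $P=\mathcal A^{-T}Y$, $Q=\mathcal AX$ with $Y=(G,Z,W)$, $X=(g,z,w)$; (2) set $G=g=0$ and rotate: $\tilde z=R(\theta(t))^Tz$, $\tilde Z=R(\theta(t))^TZ$, $\tilde w=R(\theta(t))^Tw$, $\tilde W=R(\theta(t))^TW$; (3) $\hat z=\tilde z/r(t)$, $\hat Z=r(t)\tilde Z-\dot r(t)\tilde z$, $\hat w=\tilde w/r(t)$, $\hat W=r(t)\tilde W-\dot r(t)\tilde w$; (4) replace the time $t$ by the true anomaly $\theta$ as independent variable; (5) $\bar z=\sigma\hat z$, $\bar Z=\sigma^{-1}\hat Z$, $\bar w=\sigma\hat w$, $\bar W=\sigma^{-1}\hat W$. Then the elliptic triangle solution $Q(t)=(r(t)R(\theta(t))a_1,r(t)R(\theta(t))a_2,r(t)R(\theta(t))a_3)^T$, $P(t)=M\dot Q(t)$, is transformed to the solution, with $G\equiv g\equiv0$, of the Hamiltonian system with Hamiltonian $H$ given by $$(\bar Z(\theta),\bar W(\theta))=(0,\sigma,0,0),\qquad (\bar z(\theta),\bar w(\theta))=(\sigma,0,0,0).$$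
   Context: Setting: masses $m_1,m_2,m_3>0$ with $m_1+m_2+m_3=1$, charges $e_i\in\mathbb{R}$, $\delta_{ij}=1-\frac{e_ie_j}{m_im_j}>0$, with $\delta_{ij}^{1/3}+\delta_{jk}^{1/3}>\delta_{ki}^{1/3}$ for cyclic $(i,j,k)$. $M={\rm diag}(m_1I_2,m_2I_2,m_3I_2)$. Let $\theta_1,\theta_2,\theta_3$ be the inner angles of a non-collinear central configuration of the charged problem (so $\sin\theta_1:\sin\theta_2:\sin\theta_3=\delta_{23}^{1/3}:\delta_{31}^{1/3}:\delta_{12}^{1/3}$), $\alpha=\sqrt{m_2m_3\sin^2\theta_1+m_3m_1\sin^2\theta_2+m_1m_2\sin^2\theta_3}$, and $a_1=\frac1\alpha(m_2\cos\theta_2\sin\theta_3-m_3\sin\theta_2\cos\theta_3,\ (m_2+m_3)\sin\theta_2\sin\theta_3)^T$, $a_2=\frac1\alpha(-m_1\cos\theta_2\sin\theta_3-m_3\sin(\theta_2+\theta_3),\ -m_1\sin\theta_2\sin\theta_3)^T$, $a_3=\frac1\alpha(m_2\sin(\theta_2+\theta_3)+m_1\sin\theta_2\cos\theta_3,\ -m_1\sin\theta_2\sin\theta_3)^T$ (this configuration has center of mass $0$ and $\sum m_i|a_i|^2=1$). $J=\begin{pmatrix}0&-1\\1&0\end{pmatrix}$, $R(\varphi)$ rotation by $\varphi$. $A_i=(a_i,Ja_i)$ ($2\times2$), $\rho_i=\sqrt{m_1m_2m_3}/m_i$, $B_1=\frac{\rho_1\sin\theta_1}{\alpha}I$, $B_2=-\frac{\rho_2\sin\theta_2}{\alpha}R(\theta_3)$,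 $B_3=-\frac{\rho_3\sin\theta_3}{\alpha}R(-\theta_2)$, and $\mathcal A$ is the $6\times6$ matrix with block rows $(I,A_i,B_i)$, $i=1,2,3$ (it satisfies $\mathcal A^TM\mathcal A=I$). $\mu=\sum_{i<j}m_im_j\delta_{ij}/|a_i-a_j|$. $z(t)=r(t)(\cos\theta(t),\sin\theta(t))$ is an elliptic Kepler orbit of $\ddot z=-\mu z/|z|^3$ with eccentricity $e\in[0,1)$ and parameter $p>0$, so that in terms of the true anomaly $r(\theta)=p/(1+e\cos\theta)$; $\sigma=(\mu p)^{1/4}$. $U(z,w)=\sum_{i<j}\frac{m_im_j\delta_{ij}}{|(A_i-A_j)z+(B_i-B_j)w|}$ for $z,w\in\mathbb{R}^2$, and $$H(\theta,\bar Z,\bar W,\bar z,\bar w)=\tfrac12(|\bar Z|^2+|\bar W|^2)+(\bar z\cdot J\bar Z+\bar w\cdot J\bar W)+\frac{p-r(\theta)}{2p}(|\bar z|^2+|\bar w|^2)-\frac{r(\theta)}{(\mu p)^{1/4}}U(\bar z,\bar w).$$ *)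

(* Defs.v *)
From Stdlib Require Import Reals Lra.
From Coquelicot Require Import Coquelicot.
Open Scope R_scope.

Definition V2 := (R * R)%type.
Definition v0 : V2 := (0, 0).
Definition vadd (u v : V2) : V2 := (fst u + fst v, snd u + snd v).
Definition vsub (u v : V2) : V2 := (fst u - fst v, snd u - snd v).
Definition vscal (k : R) (u : V2) : V2 := (k * fst u, k * snd u).
Definition vdot (u v : V2) : R := fst u * fst v + snd u * snd v.
Definition vnorm (u : V2) : R := sqrt (fst u ^ 2 + snd u ^ 2).

Record M2 := mkM2 { a11 : R; a12 : R; a21 : R; a22 : R }.
Definition mv (A : M2) (u : V2) : V2 :=
  (a11 A * fst u + a12 A * snd u, a21 A * fst u + a22 A * snd u).
Definition mtv (A : M2) (u : V2) : V2 :=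
  (a11 A * fst u + a21 A * snd u, a12 A * fst u + a22 A * snd u).
Definition msub (A B : M2) : M2 :=
  mkM2 (a11 A - a11 B) (a12 A - a12 B) (a21 A - a21 B) (a22 A - a22 B).
Definition mscal (k : R) (A : M2) : M2 :=
  mkM2 (k * a11 A) (k * a12 A) (k * a21 A) (k * a22 A).
Definition I2 : M2 := mkM2 1 0 0 1.
Definition Jm : M2 := mkM2 0 (-1) 1 0.
Definition Rot (phi : R) : M2 := mkM2 (cos phi) (- sin phi) (sin phi) (cos phi).
Definition colJ (a : V2) : M2 := mkM2 (fst a) (- snd a) (snd a) (fst a).

(** Data of the problem: masses, charges, inner angles. *)
Record cfg := mkcfg {
  m1 : R; m2 : R; m3 : R;
  ch1 : R; ch2 : R; ch3 : R;
  th1 : R; th2 : R; th3 : R }.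

Definition delta (ci cj mi mj : R) : R := 1 - ci * cj / (mi * mj).
Definition d12 (d : cfg) := delta (ch1 d) (ch2 d) (m1 d) (m2 d).
Definition d23 (d : cfg) := delta (ch2 d) (ch3 d) (m2 d) (m3 d).
Definition d31 (d : cfg) := delta (ch3 d) (ch1 d) (m3 d) (m1 d).

Definition cbrt (x : R) : R := Rpower x (/ 3).

Definition alpha (d : cfg) : R :=
  sqrt (m2 d * m3 d * sin (th1 d) ^ 2 + m3 d * m1 d * sin (th2 d) ^ 2
        + m1 d * m2 d * sin (th3 d) ^ 2).

Definition pa1 (d : cfg) : V2 :=
  vscal (/ alpha d)
   (m2 d * cos (th2 d) * sin (th3 d) - m3 d * sin (th2 d) * cos (th3 d),
    (m2 d + m3 d) * sin (th2 d) * sin (th3 d)).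
Definition pa2 (d : cfg) : V2 :=
  vscal (/ alpha d)
   (- m1 d * cos (th2 d) * sin (th3 d) - m3 d * sin (th2 d + th3 d),
    - m1 d * sin (th2 d) * sin (th3 d)).
Definition pa3 (d : cfg) : V2 :=
  vscal (/ alpha d)
   (m2 d * sin (th2 d + th3 d) + m1 d * sin (th2 d) * cos (th3 d),
    - m1 d * sin (th2 d) * sin (th3 d)).

Definition Am1 (d : cfg) : M2 := colJ (pa1 d).
Definition Am2 (d : cfg) : M2 := colJ (pa2 d).
Definition Am3 (d : cfg) : M2 := colJ (pa3 d).

Definition rho1 (d : cfg) := sqrt (m1 d * m2 d * m3 d) / m1 d.
Definition rho2 (d : cfg) := sqrt (m1 d * m2 d * m3 d) / m2 d.
Definition rho3 (d : cfg) := sqrt (m1 d * m2 d * m3 d) / m3 d.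

Definition Bm1 (d : cfg) : M2 := mscal (rho1 d * sin (th1 d) / alpha d) I2.
Definition Bm2 (d : cfg) : M2 := mscal (- (rho2 d * sin (th2 d) / alpha d)) (Rot (th3 d)).
Definition Bm3 (d : cfg) : M2 := mscal (- (rho3 d * sin (th3 d) / alpha d)) (Rot (- th2 d)).

Definition mu (d : cfg) : R :=
  m1 d * m2 d * d12 d / vnorm (vsub (pa1 d) (pa2 d))
  + m1 d * m3 d * d31 d / vnorm (vsub (pa1 d) (pa3 d))
  + m2 d * m3 d * d23 d / vnorm (vsub (pa2 d) (pa3 d)).

Definition Upot (d : cfg) (z w : V2) : R :=
  m1 d * m2 d * d12 d
    / vnorm (vadd (mv (msub (Am1 d) (Am2 d)) z) (mv (msub (Bm1 d) (Bm2 d)) w))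
  + m1 d * m3 d * d31 d
    / vnorm (vadd (mv (msub (Am1 d) (Am3 d)) z) (mv (msub (Bm1 d) (Bm3 d)) w))
  + m2 d * m3 d * d23 d
    / vnorm (vadd (mv (msub (Am2 d) (Am3 d)) z) (mv (msub (Bm2 d) (Bm3 d)) w)).

(** r as a function of the true anomaly *)
Definition rtrue (ecc p th : R) : R := p / (1 + ecc * cos th).

Definition sigmaK (d : cfg) (p : R) : R := Rpower (mu d * p) (/ 4).

(** H(theta, Zb, Wb, zb, wb): momenta (Zb,Wb), positions (zb,wb). *)
Definition Ham (d : cfg) (ecc p : R) (th : R) (ZW zw : V2 * V2) : R :=
  let Zb := fst ZW in let Wb := snd ZW in
  let zb := fst zw in let wb := snd zw in
  (vdot Zb Zb + vdot Wb Wb) / 2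
  + (vdot zb (mv Jm Zb) + vdot wb (mv Jm Wb))
  + (p - rtrue ecc p th) / (2 * p) * (vdot zb zb + vdot wb wb)
  - rtrue ecc p th / sigmaK d p * Upot d zb wb.

Definition coord4 (u : V2 * V2) (k : nat) : R :=
  match k with
  | 0%nat => fst (fst u) | 1%nat => snd (fst u)
  | 2%nat => fst (snd u) | _ => snd (snd u) end.
Definition set4 (u : V2 * V2) (k : nat) (s : R) : V2 * V2 :=
  match k with
  | 0%nat => ((s, snd (fst u)), snd u) | 1%nat => ((fst (fst u), s), snd u)
  | 2%nat => (fst u, (s, snd (snd u))) | _ => (fst u, (fst (snd u), s)) end.

Definition ham_solution (H : R -> V2 * V2 -> V2 * V2 -> R)
  (y x : R -> V2 * V2) : Prop :=
  forall (th : R) (k : nat), (k < 4)%nat ->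
    exists dxk dyk : R,
      is_derive (fun s => coord4 (x s) k) th dxk /\
      is_derive (fun s => coord4 (y s) k) th dyk /\
      is_derive (fun s => H th (set4 (y th) k s) (x th)) (coord4 (y th) k) dxk /\
      is_derive (fun s => H th (y th) (set4 (x th) k s)) (coord4 (x th) k) (- dyk).

Definition is_derive2 (f : R -> V2) (t : R) (v : V2) : Prop :=
  is_derive (fun s => fst (f s)) t (fst v) /\ is_derive (fun s => snd (f s)) t (snd v).

Definition qell (a : V2) (rf thf : R -> R) (t : R) : V2 :=
  vscal (rf t) (mv (Rot (thf t)) a).

(** steps (2),(3),(5) of the change of variables, for a position u and
    momentum U at time t with r = r(t), rd = r'(t), phi = theta(t). *)
Definition barpos (sg r phi : R) (u : V2) : V2 :=
  vscal sg (vscal (/ r) (mtv (Rot phi) u)).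
Definition barmom (sg r rd phi : R) (U u : V2) : V2 :=
  vscal (/ sg) (vsub (vscal r (mtv (Rot phi) U)) (vscal rd (mtv (Rot phi) u))).

(* Main.v *)
Require Import Defs.
From Stdlib Require Import Reals Lra Lia.
From Coquelicot Require Import Coquelicot.
Open Scope R_scope.


Lemma rtrue_pos ecc p th : 0 <= ecc < 1 -> 0 < p -> 0 < 1 + ecc * cos th /\ 0 < rtrue ecc p th.
Proof.
  intros He Hp. pose proof (COS_bound th) as [Hc1 Hc2].
  assert (0 < 1 + ecc * cos th) by nra. split; auto.
  unfold rtrue. apply Rdiv_lt_0_compat; auto.
Qed.

Lemma deriv_eq (f : R -> R) (t l1 l2 : R) : is_derive f t l1 -> is_derive f t l2 -> l1 = l2.
Proof. intros H1 H2. rewrite <- (is_derive_unique _ _ _ H1). now apply is_derive_unique. Qed.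

Lemma Dv (f : R -> R) (t l : R) : is_derive f t l -> Derive (fun x => f x) t = l.
Proof. intro H. now apply is_derive_unique. Qed.

Lemma kepler (mu ecc p : R) (Hecc : 0 <= ecc < 1) (Hp : 0 < p)
  (rf thf rdot thdot vx vy : R -> R)
  (Hrd : forall t, is_derive rf t (rdot t))
  (Hthd : forall t, is_derive thf t (thdot t))
  (Hthpos : forall t, 0 < thdot t)
  (Hr : forall t, rf t = rtrue ecc p (thf t))
  (Hvx : forall t, is_derive (fun s => rf s * cos (thf s)) t (vx t))
  (Hvy : forall t, is_derive (fun s => rf s * sin (thf s)) t (vy t))
  (Hax : forall t, is_derive vx t
           (- mu * (rf t * cos (thf t))
              / vnorm (rf t * cos (thf t), rf t * sin (thf t)) ^ 3))
  (Hay : forall t, is_derive vy t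
           (- mu * (rf t * sin (thf t))
              / vnorm (rf t * cos (thf t), rf t * sin (thf t)) ^ 3)) :
  forall t, 0 < rf t /\
    vx t = rdot t * cos (thf t) - rf t * sin (thf t) * thdot t /\
    vy t = rdot t * sin (thf t) + rf t * cos (thf t) * thdot t /\
    (rf t ^ 2 * thdot t) ^ 2 = mu * p.
Proof.
  assert (Hrpos : forall t, 0 < rf t /\ 0 < 1 + ecc * cos (thf t)).
  { intro t. rewrite Hr. destruct (rtrue_pos ecc p (thf t) Hecc Hp); auto. }
  assert (HK1 : forall t, vx t = rdot t * cos (thf t) - rf t * sin (thf t) * thdot t).
  { intro t. apply (deriv_eq _ t _ _ (Hvx t)). auto_derive.
    - split; [eexists; apply Hrd|split;[eexists; apply Hthd|auto]].
    - rewrite (Dv _ _ _ (Hrd t)), (Dv _ _ _ (Hthd t)). ring. }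
  assert (HK1' : forall t, vy t = rdot t * sin (thf t) + rf t * cos (thf t) * thdot t).
  { intro t. apply (deriv_eq _ t _ _ (Hvy t)). auto_derive.
    - split; [eexists; apply Hrd|split;[eexists; apply Hthd|auto]].
    - rewrite (Dv _ _ _ (Hrd t)), (Dv _ _ _ (Hthd t)). ring. }
  assert (HK2 : forall t, rdot t = p * ecc * sin (thf t) * thdot t / (1 + ecc * cos (thf t))^2).
  { intro t. apply (deriv_eq rf t); auto.
    apply (is_derive_ext (fun s => p / (1 + ecc * cos (thf s)))).
    { intro s. rewrite Hr. reflexivity. }
    destruct (Hrpos t) as [_ HD].
    auto_derive.
    - split; [eexists; apply Hthd| split; [lra|auto]].
    - rewrite (Dv _ _ _ (Hthd t)). field. lra. }
  set (C := fun s => (rf s * cos (thf s)) * vy s - (rf s * sin (thf s)) * vx s).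
  assert (HC : forall s, C s = rf s ^ 2 * thdot s).
  { intro s. unfold C. rewrite HK1, HK1'.
    pose proof (sin2_cos2 (thf s)) as H1. unfold Rsqr in H1.
    transitivity (rf s ^ 2 * thdot s * (sin (thf s) * sin (thf s) + cos (thf s) * cos (thf s))).
    ring. rewrite H1; ring. }
  assert (HK4 : forall s, vx s = - (C s / p) * sin (thf s)).
  { intro s. rewrite HC, HK1, HK2, Hr. unfold rtrue. destruct (Hrpos s) as [_ HD]. field. lra. }
  assert (Htrig : forall x, sin x ^ 2 + cos x ^ 2 = 1).
  { intro x. rewrite <- !Rsqr_pow2. apply sin2_cos2. }
  assert (HK4' : forall s, vy s = (C s / p) * (ecc + cos (thf s))).
  { intro s. apply Rminus_diag_uniq. rewrite HC, HK1', HK2, Hr. unfold rtrue. destruct (Hrpos s) as [_ HD].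
    transitivity (p * thdot s * ecc * (sin (thf s) ^ 2 + cos (thf s) ^ 2 - 1) / (1 + ecc * cos (thf s))^2).
    field. lra. rewrite Htrig. field. lra. }
  assert (HCd : forall t, is_derive C t 0).
  { intro t. unfold C. auto_derive.
    - repeat split; eexists; eauto.
    - rewrite (Dv _ _ _ (Hrd t)), (Dv _ _ _ (Hthd t)), (Dv _ _ _ (Hax t)), (Dv _ _ _ (Hay t)).
      rewrite (HK1 t), (HK1' t). unfold Rdiv. ring. }
  intro t. destruct (Hrpos t) as [Hr0 HD].
  assert (Hn : vnorm (rf t * cos (thf t), rf t * sin (thf t)) = rf t).
  { unfold vnorm; simpl. apply sqrt_lem_1; try lra. nra.
    transitivity (rf t ^ 2 * (sin (thf t) ^ 2 + cos (thf t) ^ 2)). rewrite Htrig; ring. ring. }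
  assert (E1 : - (C t / p) * cos (thf t) * thdot t = - mu * (rf t * cos (thf t)) / rf t ^ 3).
  { pose proof (Hax t) as Ha. rewrite Hn in Ha. apply (deriv_eq vx t); [|apply Ha].
    apply (is_derive_ext (fun s => - (C s / p) * sin (thf s))). { intro s. now rewrite HK4. }
    auto_derive. repeat split; eexists; eauto.
    rewrite (Dv _ _ _ (HCd t)), (Dv _ _ _ (Hthd t)). field. lra. }
  assert (E2 : - (C t / p) * sin (thf t) * thdot t = - mu * (rf t * sin (thf t)) / rf t ^ 3).
  { pose proof (Hay t) as Ha. rewrite Hn in Ha. apply (deriv_eq vy t); [|apply Ha].
    apply (is_derive_ext (fun s => (C s / p) * (ecc + cos (thf s)))). { intro s. now rewrite HK4'. }
    auto_derive. repeat split; eexists; eauto.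
    rewrite (Dv _ _ _ (HCd t)), (Dv _ _ _ (Hthd t)). field. lra. }
  rewrite <- HC. repeat split; auto.
  assert (E3 : C t * thdot t / p = mu / rf t ^ 2).
  { transitivity ((C t * thdot t / p) * (sin (thf t) ^ 2 + cos (thf t) ^ 2)). rewrite Htrig; ring.
    transitivity ((mu / rf t ^ 2) * (sin (thf t) ^ 2 + cos (thf t) ^ 2)); [|rewrite Htrig; ring].
    assert (E1' : (C t / p) * cos (thf t) * thdot t = mu * cos (thf t) / rf t ^ 2).
    { transitivity (- (- (C t / p) * cos (thf t) * thdot t)). ring. rewrite E1. field. lra. }
    assert (E2' : (C t / p) * sin (thf t) * thdot t = mu * sin (thf t) / rf t ^ 2).
    { transitivity (- (- (C t / p) * sin (thf t) * thdot t)). ring. rewrite E2. field. lra. }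
    transitivity (((C t / p) * sin (thf t) * thdot t) * sin (thf t) + ((C t / p) * cos (thf t) * thdot t) * cos (thf t)).
    field. lra. rewrite E1', E2'. field. lra. }
  rewrite HC in E3 |- *.
  apply (f_equal (fun x => x * p * rf t ^ 2)) in E3.
  transitivity (rf t ^ 2 * thdot t * thdot t / p * p * rf t ^ 2). field. lra.
  rewrite E3. field. lra.
Qed.

Lemma config_facts (d : cfg)
  (Hm1 : 0 < m1 d) (Hm2 : 0 < m2 d) (Hm3 : 0 < m3 d)
  (Hmsum : m1 d + m2 d + m3 d = 1)
  (Hth1 : 0 < th1 d) (Hth2 : 0 < th2 d) (Hth3 : 0 < th3 d)
  (Hthsum : th1 d + th2 d + th3 d = PI) :
  let al := alpha d in
  let s1 := sin (th1 d) in let s2 := sin (th2 d) in let s3 := sin (th3 d) in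
  let c2 := cos (th2 d) in let c3 := cos (th3 d) in
  let a1x := fst (pa1 d) in let a1y := snd (pa1 d) in
  let a2x := fst (pa2 d) in let a2y := snd (pa2 d) in
  let a3x := fst (pa3 d) in let a3y := snd (pa3 d) in
  let b1 := rho1 d * s1 / al in
  let b2 := - (rho2 d * s2 / al) in
  let b3 := - (rho3 d * s3 / al) in
  0 < al /\ 0 < s1 /\ 0 < s2 /\ 0 < s3 /\
  al ^ 2 = m2 d * m3 d * s1 ^ 2 + m3 d * m1 d * s2 ^ 2 + m1 d * m2 d * s3 ^ 2 /\
  m1 d * a1x + m2 d * a2x + m3 d * a3x = 0 /\
  m1 d * a1y + m2 d * a2y + m3 d * a3y = 0 /\
  a1x - a2x = c2 * s3 / al /\ a1y - a2y = s2 * s3 / al /\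
  a1x - a3x = - (s2 * c3) / al /\ a1y - a3y = s2 * s3 / al /\
  a2x - a3x = - s1 / al /\ a2y - a3y = 0 /\
  m1 d * (a1x ^ 2 + a1y ^ 2) + m2 d * (a2x ^ 2 + a2y ^ 2) + m3 d * (a3x ^ 2 + a3y ^ 2) = 1 /\
  m1 d * b1 + m2 d * b2 * c3 + m3 d * b3 * c2 = 0 /\
  m2 d * b2 * s3 - m3 d * b3 * s2 = 0 /\
  m1 d * b1 ^ 2 + m2 d * b2 ^ 2 + m3 d * b3 ^ 2 = 1 /\
  m1 d * b1 * a1x + m2 d * b2 * (c3 * a2x + s3 * a2y) + m3 d * b3 * (c2 * a3x - s2 * a3y) = 0 /\
  m1 d * b1 * a1y + m2 d * b2 * (- s3 * a2x + c3 * a2y) + m3 d * b3 * (s2 * a3x + c2 * a3y) = 0.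
Proof.
  intros.
  assert (Hs1 : s1 = s2 * c3 + c2 * s3).
  { unfold s1, s2, s3, c2, c3. replace (th1 d) with (PI - (th2 d + th3 d)) by lra.
    rewrite sin_PI_x, sin_plus. ring. }
  assert (Hsp : forall x, 0 < x < PI -> 0 < sin x) by (intros; apply sin_gt_0; lra).
  assert (Hs1p : 0 < s1) by (apply Hsp; lra).
  assert (Hs2p : 0 < s2) by (apply Hsp; lra).
  assert (Hs3p : 0 < s3) by (apply Hsp; lra).
  assert (Hal2 : al ^ 2 = m2 d * m3 d * s1 ^ 2 + m3 d * m1 d * s2 ^ 2 + m1 d * m2 d * s3 ^ 2).
  { unfold al, alpha. fold s1 s2 s3. rewrite pow2_sqrt; [ring|].
    assert (0 < m2 d * m3 d * s1 ^ 2) by (apply Rmult_lt_0_compat; [nra| apply pow_lt; lra]).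
    assert (0 < m3 d * m1 d * s2 ^ 2) by (apply Rmult_lt_0_compat; [nra| apply pow_lt; lra]).
    assert (0 < m1 d * m2 d * s3 ^ 2) by (apply Rmult_lt_0_compat; [nra| apply pow_lt; lra]).
    lra. }
  assert (Halp : 0 < al).
  { unfold al, alpha. apply sqrt_lt_R0. fold s1 s2 s3.
    assert (0 < m2 d * m3 d * s1 ^ 2) by (apply Rmult_lt_0_compat; [nra| apply pow_lt; lra]).
    assert (0 < m3 d * m1 d * s2 ^ 2) by (apply Rmult_lt_0_compat; [nra| apply pow_lt; lra]).
    assert (0 < m1 d * m2 d * s3 ^ 2) by (apply Rmult_lt_0_compat; [nra| apply pow_lt; lra]).
    lra. }
  assert (Hm3e : m3 d = 1 - m1 d - m2 d) by lra.
  assert (Hsp23 : sin (th2 d + th3 d) = s1) by (rewrite Hs1, sin_plus; reflexivity).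
  assert (Ea1x : a1x = / al * (m2 d * c2 * s3 - m3 d * s2 * c3)) by reflexivity.
  assert (Ea1y : a1y = / al * ((m2 d + m3 d) * s2 * s3)) by reflexivity.
  assert (Ea2x : a2x = / al * (- m1 d * c2 * s3 - m3 d * s1)) by (unfold a2x, pa2; simpl; now rewrite Hsp23).
  assert (Ea2y : a2y = / al * (- m1 d * s2 * s3)) by reflexivity.
  assert (Ea3x : a3x = / al * (m2 d * s1 + m1 d * s2 * c3)) by (unfold a3x, pa3; simpl; now rewrite Hsp23).
  assert (Ea3y : a3y = / al * (- m1 d * s2 * s3)) by reflexivity.
  assert (HS : sqrt (m1 d * m2 d * m3 d) ^ 2 = m1 d * m2 d * m3 d).
  { apply pow2_sqrt. assert (0 < m1 d * m2 d) by nra. nra. }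
  assert (Eb1 : m1 d * b1 = sqrt (m1 d * m2 d * m3 d) * s1 / al) by (unfold b1, rho1; field; lra).
  assert (Eb2 : m2 d * b2 = - (sqrt (m1 d * m2 d * m3 d) * s2 / al)) by (unfold b2, rho2; field; lra).
  assert (Eb3 : m3 d * b3 = - (sqrt (m1 d * m2 d * m3 d) * s3 / al)) by (unfold b3, rho3; field; lra).
  clearbody a1x a1y a2x a2y a3x a3y b1 b2 b3.
  assert (Hc2 : s2 ^ 2 + c2 ^ 2 = 1) by (unfold s2, c2; rewrite <- !Rsqr_pow2; apply sin2_cos2).
  assert (Hc3 : s3 ^ 2 + c3 ^ 2 = 1) by (unfold s3, c3; rewrite <- !Rsqr_pow2; apply sin2_cos2).
  assert (D12x : a1x - a2x = c2 * s3 / al) by (rewrite Ea1x, Ea2x, Hs1, Hm3e; field; lra).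
  assert (D12y : a1y - a2y = s2 * s3 / al) by (rewrite Ea1y, Ea2y, Hm3e; field; lra).
  assert (D13x : a1x - a3x = - (s2 * c3) / al) by (rewrite Ea1x, Ea3x, Hs1, Hm3e; field; lra).
  assert (D13y : a1y - a3y = s2 * s3 / al) by (rewrite Ea1y, Ea3y, Hm3e; field; lra).
  assert (D23x : a2x - a3x = - s1 / al) by (rewrite Ea2x, Ea3x, Hs1, Hm3e; field; lra).
  assert (D23y : a2y - a3y = 0) by (rewrite Ea2y, Ea3y; ring).
  assert (E1x : m1 d * a1x + m2 d * a2x + m3 d * a3x = 0) by (rewrite Ea1x, Ea2x, Ea3x; field; lra).
  assert (E1y : m1 d * a1y + m2 d * a2y + m3 d * a3y = 0) by (rewrite Ea1y, Ea2y, Ea3y; field; lra).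
  assert (E3a : m1 d * b1 + m2 d * b2 * c3 + m3 d * b3 * c2 = 0).
  { replace (m2 d * b2 * c3) with ((m2 d * b2) * c3) by ring.
    replace (m3 d * b3 * c2) with ((m3 d * b3) * c2) by ring.
    rewrite Eb1, Eb2, Eb3, Hs1. field. lra. }
  assert (E3b : m2 d * b2 * s3 - m3 d * b3 * s2 = 0).
  { replace (m2 d * b2 * s3) with ((m2 d * b2) * s3) by ring.
    replace (m3 d * b3 * s2) with ((m3 d * b3) * s2) by ring.
    rewrite Eb2, Eb3. field. lra. }
  repeat split; auto.
  -
    transitivity (m1 d * m2 d * ((a1x - a2x)^2 + (a1y - a2y)^2) + m1 d * m3 d * ((a1x - a3x)^2 + (a1y - a3y)^2)
       + m2 d * m3 d * ((a2x - a3x)^2 + (a2y - a3y)^2)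
       + (m1 d * a1x + m2 d * a2x + m3 d * a3x)^2 + (m1 d * a1y + m2 d * a2y + m3 d * a3y)^2).
    { rewrite Hm3e. ring. }
    rewrite D12x, D12y, D13x, D13y, D23x, D23y, E1x, E1y.
    apply (Rmult_eq_reg_r (al ^ 2)); [|nra].
    transitivity (m1 d * m2 d * s3 ^ 2 * (s2 ^ 2 + c2 ^ 2) + m1 d * m3 d * s2 ^ 2 * (s3 ^ 2 + c3 ^ 2) + m2 d * m3 d * s1 ^ 2).
    field. lra. rewrite Hc2, Hc3, Hal2. ring.
  -
    apply (Rmult_eq_reg_r (m1 d * m2 d * m3 d)); [|assert (0 < m1 d * m2 d) by nra; nra].
    transitivity (m2 d * m3 d * (m1 d * b1) ^ 2 + m1 d * m3 d * (m2 d * b2) ^ 2 + m1 d * m2 d * (m3 d * b3) ^ 2).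
    ring. rewrite Eb1, Eb2, Eb3.
    apply (Rmult_eq_reg_r (al ^ 2)); [|nra].
    transitivity ((sqrt (m1 d * m2 d * m3 d))^2 * (m2 d * m3 d * s1 ^ 2 + m3 d * m1 d * s2 ^ 2 + m1 d * m2 d * s3 ^ 2)).
    field. lra. rewrite HS, <- Hal2. ring.
  -
    replace a2x with (a1x - c2 * s3 / al) by lra.
    replace a2y with (a1y - s2 * s3 / al) by lra.
    replace a3x with (a1x + (s2 * c3) / al) by lra.
    replace a3y with (a1y - s2 * s3 / al) by lra.
    transitivity (a1x * (m1 d * b1 + m2 d * b2 * c3 + m3 d * b3 * c2) + a1y * (m2 d * b2 * s3 - m3 d * b3 * s2)
      - (m2 d * b2) * (c3 * (c2 * s3 / al) + s3 * (s2 * s3 / al)) - (m3 d * b3) * (c2 * (- (s2 * c3) / al) - s2 * (s2 * s3 / al))).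
    field. lra. rewrite E3a, E3b, Eb2, Eb3. field. lra.
  -
    replace a2x with (a1x - c2 * s3 / al) by lra.
    replace a2y with (a1y - s2 * s3 / al) by lra.
    replace a3x with (a1x + (s2 * c3) / al) by lra.
    replace a3y with (a1y - s2 * s3 / al) by lra.
    transitivity (a1y * (m1 d * b1 + m2 d * b2 * c3 + m3 d * b3 * c2) - a1x * (m2 d * b2 * s3 - m3 d * b3 * s2)
      - (m2 d * b2) * (- s3 * (c2 * s3 / al) + c3 * (s2 * s3 / al)) - (m3 d * b3) * (s2 * (- (s2 * c3) / al) + c2 * (s2 * s3 / al))).
    field. lra. rewrite E3a, E3b, Eb2, Eb3. field. lra.
Qed.
Lemma solve6 (m1 m2 m3 a1x a1y a2x a2y a3x a3y b1 b2 b3 c2 s2 c3 s3 gx gy ux uy wx wy : R)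
  (hm : m1 + m2 + m3 = 1)
  (E1x : m1 * a1x + m2 * a2x + m3 * a3x = 0)
  (E1y : m1 * a1y + m2 * a2y + m3 * a3y = 0)
  (E2 : m1 * (a1x ^ 2 + a1y ^ 2) + m2 * (a2x ^ 2 + a2y ^ 2) + m3 * (a3x ^ 2 + a3y ^ 2) = 1)
  (E3a : m1 * b1 + m2 * b2 * c3 + m3 * b3 * c2 = 0)
  (E3b : m2 * b2 * s3 - m3 * b3 * s2 = 0)
  (E4 : m1 * b1 ^ 2 + m2 * b2 ^ 2 + m3 * b3 ^ 2 = 1)
  (Hc2 : s2 ^ 2 + c2 ^ 2 = 1) (Hc3 : s3 ^ 2 + c3 ^ 2 = 1)
  (E5x : m1 * b1 * a1x + m2 * b2 * (c3 * a2x + s3 * a2y) + m3 * b3 * (c2 * a3x - s2 * a3y) = 0)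
  (E5y : m1 * b1 * a1y + m2 * b2 * (- s3 * a2x + c3 * a2y) + m3 * b3 * (s2 * a3x + c2 * a3y) = 0)
  (q1x : gx + (a1x * ux - a1y * uy) + (b1 * wx) = 0)
  (q1y : gy + (a1y * ux + a1x * uy) + (b1 * wy) = 0)
  (q2x : gx + (a2x * ux - a2y * uy) + (b2 * c3 * wx - b2 * s3 * wy) = 0)
  (q2y : gy + (a2y * ux + a2x * uy) + (b2 * s3 * wx + b2 * c3 * wy) = 0)
  (q3x : gx + (a3x * ux - a3y * uy) + (b3 * c2 * wx + b3 * s2 * wy) = 0)
  (q3y : gy + (a3y * ux + a3x * uy) + (- b3 * s2 * wx + b3 * c2 * wy) = 0) :
  gx = 0 /\ gy = 0 /\ ux = 0 /\ uy = 0 /\ wx = 0 /\ wy = 0.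
Proof.
  assert (Gx : gx = 0).
  { assert (X : m1 * (gx + (a1x * ux - a1y * uy) + (b1 * wx)) + m2 * (gx + (a2x * ux - a2y * uy) + (b2 * c3 * wx - b2 * s3 * wy))
       + m3 * (gx + (a3x * ux - a3y * uy) + (b3 * c2 * wx + b3 * s2 * wy))
       = gx * (m1 + m2 + m3) + ux * (m1 * a1x + m2 * a2x + m3 * a3x) - uy * (m1 * a1y + m2 * a2y + m3 * a3y)
         + wx * (m1 * b1 + m2 * b2 * c3 + m3 * b3 * c2) - wy * (m2 * b2 * s3 - m3 * b3 * s2)) by ring.
    rewrite q1x, q2x, q3x, hm, E1x, E1y, E3a, E3b in X. lra. }
  assert (Gy : gy = 0).
  { assert (X : m1 * (gy + (a1y * ux + a1x * uy) + (b1 * wy)) + m2 * (gy + (a2y * ux + a2x * uy) + (b2 * s3 * wx + b2 * c3 * wy))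
       + m3 * (gy + (a3y * ux + a3x * uy) + (- b3 * s2 * wx + b3 * c2 * wy))
       = gy * (m1 + m2 + m3) + ux * (m1 * a1y + m2 * a2y + m3 * a3y) + uy * (m1 * a1x + m2 * a2x + m3 * a3x)
         + wy * (m1 * b1 + m2 * b2 * c3 + m3 * b3 * c2) + wx * (m2 * b2 * s3 - m3 * b3 * s2)) by ring.
    rewrite q1y, q2y, q3y, hm, E1x, E1y, E3a, E3b in X. lra. }
  subst gx gy.
  set (L1x := 0 + (a1x * ux - a1y * uy) + (b1 * wx)) in q1x.
  set (L1y := 0 + (a1y * ux + a1x * uy) + (b1 * wy)) in q1y.
  set (L2x := 0 + (a2x * ux - a2y * uy) + (b2 * c3 * wx - b2 * s3 * wy)) in q2x.
  set (L2y := 0 + (a2y * ux + a2x * uy) + (b2 * s3 * wx + b2 * c3 * wy)) in q2y.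
  set (L3x := 0 + (a3x * ux - a3y * uy) + (b3 * c2 * wx + b3 * s2 * wy)) in q3x.
  set (L3y := 0 + (a3y * ux + a3x * uy) + (- b3 * s2 * wx + b3 * c2 * wy)) in q3y.
  assert (Ux : ux = 0).
  { assert (X : m1 * (a1x * L1x + a1y * L1y) + m2 * (a2x * L2x + a2y * L2y) + m3 * (a3x * L3x + a3y * L3y)
      = ux * (m1 * (a1x ^ 2 + a1y ^ 2) + m2 * (a2x ^ 2 + a2y ^ 2) + m3 * (a3x ^ 2 + a3y ^ 2))
      + wx * (m1 * b1 * a1x + m2 * b2 * (c3 * a2x + s3 * a2y) + m3 * b3 * (c2 * a3x - s2 * a3y))
      + wy * (m1 * b1 * a1y + m2 * b2 * (- s3 * a2x + c3 * a2y) + m3 * b3 * (s2 * a3x + c2 * a3y)))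
     by (unfold L1x, L1y, L2x, L2y, L3x, L3y; ring).
    rewrite q1x, q1y, q2x, q2y, q3x, q3y, E2, E5x, E5y in X. lra. }
  assert (Uy : uy = 0).
  { assert (X : m1 * (- a1y * L1x + a1x * L1y) + m2 * (- a2y * L2x + a2x * L2y) + m3 * (- a3y * L3x + a3x * L3y)
      = uy * (m1 * (a1x ^ 2 + a1y ^ 2) + m2 * (a2x ^ 2 + a2y ^ 2) + m3 * (a3x ^ 2 + a3y ^ 2))
      - wx * (m1 * b1 * a1y + m2 * b2 * (- s3 * a2x + c3 * a2y) + m3 * b3 * (s2 * a3x + c2 * a3y))
      + wy * (m1 * b1 * a1x + m2 * b2 * (c3 * a2x + s3 * a2y) + m3 * b3 * (c2 * a3x - s2 * a3y)))
     by (unfold L1x, L1y, L2x, L2y, L3x, L3y; ring).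
    rewrite q1x, q1y, q2x, q2y, q3x, q3y, E2, E5x, E5y in X. lra. }
  subst ux uy.
  assert (Wx : wx = 0).
  { assert (X : m1 * (b1 * L1x) + m2 * (b2 * c3 * L2x + b2 * s3 * L2y) + m3 * (b3 * c2 * L3x - b3 * s2 * L3y)
      = wx * (m1 * b1 ^ 2 + m2 * b2 ^ 2 * (s3 ^ 2 + c3 ^ 2) + m3 * b3 ^ 2 * (s2 ^ 2 + c2 ^ 2)))
     by (unfold L1x, L1y, L2x, L2y, L3x, L3y; ring).
    rewrite ?q1x, ?q1y, ?q2x, ?q2y, ?q3x, ?q3y, Hc2, Hc3 in X. rewrite !Rmult_1_r, E4 in X. lra. }
  assert (Wy : wy = 0).
  { assert (X : m1 * (b1 * L1y) + m2 * (- b2 * s3 * L2x + b2 * c3 * L2y) + m3 * (b3 * s2 * L3x + b3 * c2 * L3y)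
      = wy * (m1 * b1 ^ 2 + m2 * b2 ^ 2 * (s3 ^ 2 + c3 ^ 2) + m3 * b3 ^ 2 * (s2 ^ 2 + c2 ^ 2)))
     by (unfold L1x, L1y, L2x, L2y, L3x, L3y; ring).
    rewrite ?q1x, ?q1y, ?q2x, ?q2y, ?q3x, ?q3y, Hc2, Hc3 in X. rewrite !Rmult_1_r, E4 in X. lra. }
  repeat split; auto.
Qed.



Lemma inv_norm_deriv (c v1 v2 e1 e2 s0 : R) : 0 < v1 ^ 2 + v2 ^ 2 ->
  is_derive (fun s => c / vnorm (v1 + (s - s0) * e1, v2 + (s - s0) * e2)) s0
    (- c * (v1 * e1 + v2 * e2) / vnorm (v1, v2) ^ 3).
Proof.
  intro Hp. unfold vnorm; cbn [fst snd].
  assert (Hs : 0 < sqrt (v1 ^ 2 + v2 ^ 2)) by (apply sqrt_lt_R0; auto).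
  auto_derive;
  replace ((v1 + (s0 + - s0) * e1) * ((v1 + (s0 + - s0) * e1) * 1) + (v2 + (s0 + - s0) * e2) * ((v2 + (s0 + - s0) * e2) * 1)) with (v1^2+v2^2) by ring.
  - repeat split; auto; lra.
  - field. lra.
Qed.

Definition colk (MA MB : M2) (k : nat) : V2 :=
  match k with
  | 0%nat => (a11 MA, a21 MA) | 1%nat => (a12 MA, a22 MA)
  | 2%nat => (a11 MB, a21 MB) | _ => (a12 MB, a22 MB) end.

Lemma set4_lin (MA MB : M2) (x0 : V2 * V2) (k : nat) (s : R) :
  vadd (mv MA (fst (set4 x0 k s))) (mv MB (snd (set4 x0 k s))) =
  (fst (vadd (mv MA (fst x0)) (mv MB (snd x0))) + (s - coord4 x0 k) * fst (colk MA MB k),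
   snd (vadd (mv MA (fst x0)) (mv MB (snd x0))) + (s - coord4 x0 k) * snd (colk MA MB k)).
Proof.
  destruct x0 as [[z1 z2] [w1 w2]]; destruct k as [|[|[|k]]]; unfold vadd, mv; cbn;
  f_equal; ring.
Qed.

Lemma pair_term (c : R) (MA MB : M2) (x0 : V2 * V2) (k : nat) :
  let v := vadd (mv MA (fst x0)) (mv MB (snd x0)) in
  0 < fst v ^ 2 + snd v ^ 2 ->
  is_derive (fun s => c / vnorm (vadd (mv MA (fst (set4 x0 k s))) (mv MB (snd (set4 x0 k s)))))
    (coord4 x0 k) (- c * vdot v (colk MA MB k) / vnorm v ^ 3).
Proof.
  intros v Hv.
  eapply is_derive_ext; [|apply (inv_norm_deriv c (fst v) (snd v) (fst (colk MA MB k)) (snd (colk MA MB k)) (coord4 x0 k) Hv)].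
  - intro s. simpl. now rewrite set4_lin.
Qed.

Lemma Upot_deriv (d : cfg) (x0 : V2 * V2) (k : nat) :
  let v12 := vadd (mv (msub (Am1 d) (Am2 d)) (fst x0)) (mv (msub (Bm1 d) (Bm2 d)) (snd x0)) in
  let v13 := vadd (mv (msub (Am1 d) (Am3 d)) (fst x0)) (mv (msub (Bm1 d) (Bm3 d)) (snd x0)) in
  let v23 := vadd (mv (msub (Am2 d) (Am3 d)) (fst x0)) (mv (msub (Bm2 d) (Bm3 d)) (snd x0)) in
  0 < fst v12 ^ 2 + snd v12 ^ 2 -> 0 < fst v13 ^ 2 + snd v13 ^ 2 -> 0 < fst v23 ^ 2 + snd v23 ^ 2 ->
  is_derive (fun s => Upot d (fst (set4 x0 k s)) (snd (set4 x0 k s))) (coord4 x0 k)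
   (- (m1 d * m2 d * d12 d) * vdot v12 (colk (msub (Am1 d) (Am2 d)) (msub (Bm1 d) (Bm2 d)) k) / vnorm v12 ^ 3
    + - (m1 d * m3 d * d31 d) * vdot v13 (colk (msub (Am1 d) (Am3 d)) (msub (Bm1 d) (Bm3 d)) k) / vnorm v13 ^ 3
    + - (m2 d * m3 d * d23 d) * vdot v23 (colk (msub (Am2 d) (Am3 d)) (msub (Bm2 d) (Bm3 d)) k) / vnorm v23 ^ 3).
Proof.
  intros v12 v13 v23 H12 H13 H23.
  pose proof (pair_term (m1 d * m2 d * d12 d) _ _ x0 k H12) as P12.
  pose proof (pair_term (m1 d * m3 d * d31 d) _ _ x0 k H13) as P13.
  pose proof (pair_term (m2 d * m3 d * d23 d) _ _ x0 k H23) as P23.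
  pose proof (is_derive_plus _ _ _ _ _ (is_derive_plus _ _ _ _ _ P12 P13) P23) as H.
  eapply is_derive_ext; [|exact H].
  intro s. reflexivity.
Qed.

Lemma vnorm_eq (u : V2) (r : R) : 0 <= r -> fst u ^ 2 + snd u ^ 2 = r ^ 2 -> vnorm u = r.
Proof. intros H1 H2. unfold vnorm. rewrite H2. apply sqrt_pow2; auto. Qed.

Lemma vpair (ai aj : V2) (Bi Bj : M2) (sg : R) :
  vadd (mv (msub (colJ ai) (colJ aj)) (fst ((sg, 0), v0))) (mv (msub Bi Bj) (snd ((sg, 0), v0)))
  = (sg * (fst ai - fst aj), sg * (snd ai - snd aj)).
Proof. unfold vadd, mv, msub, colJ, v0; cbn. f_equal; ring. Qed.

Lemma F3gen (m1 m2 m3 a1x a1y a2x a2y a3x a3y x1 x2 x3 y1 y2 y3 : R) :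
  m1 + m2 + m3 = 1 ->
  m1 * m2 * ((a1x - a2x) * (x1 - x2) + (a1y - a2y) * (y1 - y2))
  + m1 * m3 * ((a1x - a3x) * (x1 - x3) + (a1y - a3y) * (y1 - y3))
  + m2 * m3 * ((a2x - a3x) * (x2 - x3) + (a2y - a3y) * (y2 - y3))
  = (m1 * (x1 * a1x + y1 * a1y) + m2 * (x2 * a2x + y2 * a2y) + m3 * (x3 * a3x + y3 * a3y))
    - (m1 * a1x + m2 * a2x + m3 * a3x) * (m1 * x1 + m2 * x2 + m3 * x3)
    - (m1 * a1y + m2 * a2y + m3 * a3y) * (m1 * y1 + m2 * y2 + m3 * y3).
Proof.
  intro hm.
  rewrite <- (Rmult_1_l (m1 * (x1 * a1x + y1 * a1y) + m2 * (x2 * a2x + y2 * a2y) + m3 * (x3 * a3x + y3 * a3y))).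
  rewrite <- hm. ring.
Qed.

Lemma cbrt_cube (x : R) : 0 < x -> cbrt x ^ 3 = x /\ 0 < cbrt x.
Proof.
  intro H. assert (P : 0 < cbrt x) by (unfold cbrt, Rpower; apply exp_pos). split; auto.
  rewrite <- Rpower_pow by auto. unfold cbrt. rewrite Rpower_mult.
  replace (/ 3 * INR 3) with 1 by (simpl; field). apply Rpower_1; auto.
Qed.

Lemma term_simpl (c lam l sg dx dy : R) (col : V2) : l <> 0 -> sg <> 0 ->
  - (c * (lam * l ^ 3)) * vdot (sg * dx, sg * dy) col / (sg * l) ^ 3
  = - (lam / sg ^ 2) * (c * (dx * fst col + dy * snd col)).
Proof. intros Hl Hs. unfold vdot; cbn [fst snd]. field. auto. Qed.

Lemma is_derive_value (f : R -> R) (x l1 l2 : R) : is_derive f x l1 -> l1 = l2 -> is_derive f x l2.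
Proof. intros H E. now rewrite <- E. Qed.

Lemma PosL (sg l dx dy : R) : 0 < sg -> 0 < l -> dx ^ 2 + dy ^ 2 = l ^ 2 ->
  0 < fst (sg * dx, sg * dy) ^ 2 + snd (sg * dx, sg * dy) ^ 2.
Proof.
  intros H1 H2 H3. cbn [fst snd].
  replace ((sg * dx) ^ 2 + (sg * dy) ^ 2) with (sg ^ 2 * (dx ^ 2 + dy ^ 2)) by ring.
  rewrite H3. apply Rmult_lt_0_compat; apply pow_lt; auto.
Qed.

Lemma VN (sg l dx dy : R) : 0 < sg -> 0 < l -> dx ^ 2 + dy ^ 2 = l ^ 2 ->
  vnorm (sg * dx, sg * dy) = sg * l.
Proof.
  intros H1 H2 H3. apply vnorm_eq. nra. cbn [fst snd].
  replace ((sg * dx) ^ 2 + (sg * dy) ^ 2) with (sg ^ 2 * (dx ^ 2 + dy ^ 2)) by ring.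
  rewrite H3. ring.
Qed.

Theorem proposition3p2
  (d : cfg)
  (* masses *)
  (Hm1 : 0 < m1 d) (Hm2 : 0 < m2 d) (Hm3 : 0 < m3 d)
  (Hmsum : m1 d + m2 d + m3 d = 1)
  (* delta_ij > 0 and the cube-root triangle inequalities *)
  (Hd12 : 0 < d12 d) (Hd23 : 0 < d23 d) (Hd31 : 0 < d31 d)
  (Htri1 : cbrt (d12 d) + cbrt (d23 d) > cbrt (d31 d))
  (Htri2 : cbrt (d23 d) + cbrt (d31 d) > cbrt (d12 d))
  (Htri3 : cbrt (d31 d) + cbrt (d12 d) > cbrt (d23 d))
  (* inner angles of the non-collinear central configuration *)
  (Hth1 : 0 < th1 d) (Hth2 : 0 < th2 d) (Hth3 : 0 < th3 d)
  (Hthsum : th1 d + th2 d + th3 d = PI)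
  (Hsin : exists k : R, sin (th1 d) = k * cbrt (d23 d) /\
                        sin (th2 d) = k * cbrt (d31 d) /\
                        sin (th3 d) = k * cbrt (d12 d))
  (* the elliptic Kepler orbit z(t) = r(t) (cos theta(t), sin theta(t)) *)
  (ecc p : R) (Hecc : 0 <= ecc < 1) (Hp : 0 < p)
  (rf thf rdot thdot vx vy : R -> R)
  (Hrd : forall t, is_derive rf t (rdot t))
  (Hthd : forall t, is_derive thf t (thdot t))
  (Hthpos : forall t, 0 < thdot t)
  (Hr : forall t, rf t = rtrue ecc p (thf t))
  (Hvx : forall t, is_derive (fun s => rf s * cos (thf s)) t (vx t))
  (Hvy : forall t, is_derive (fun s => rf s * sin (thf s)) t (vy t))
  (Hax : forall t, is_derive vx t
           (- mu d * (rf t * cos (thf t))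
              / vnorm (rf t * cos (thf t), rf t * sin (thf t)) ^ 3))
  (Hay : forall t, is_derive vy t
           (- mu d * (rf t * sin (thf t))
              / vnorm (rf t * cos (thf t), rf t * sin (thf t)) ^ 3))
  (* momenta of the elliptic triangle solution: P = M Q' *)
  (P1 P2 P3 : R -> V2)
  (HP1 : forall t, exists v, is_derive2 (qell (pa1 d) rf thf) t v /\ P1 t = vscal (m1 d) v)
  (HP2 : forall t, exists v, is_derive2 (qell (pa2 d) rf thf) t v /\ P2 t = vscal (m2 d) v)
  (HP3 : forall t, exists v, is_derive2 (qell (pa3 d) rf thf) t v /\ P3 t = vscal (m3 d) v)
  (* step (1): Q = A X with X = (g,z,w), and Y = (G,Z,W) = A^T P *)
  (g z w G Z W : R -> V2)
  (HQ1 : forall t, qell (pa1 d) rf thf t = vadd (g t) (vadd (mv (Am1 d) (z t)) (mv (Bm1 d) (w t))))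
  (HQ2 : forall t, qell (pa2 d) rf thf t = vadd (g t) (vadd (mv (Am2 d) (z t)) (mv (Bm2 d) (w t))))
  (HQ3 : forall t, qell (pa3 d) rf thf t = vadd (g t) (vadd (mv (Am3 d) (z t)) (mv (Bm3 d) (w t))))
  (HG : forall t, G t = vadd (P1 t) (vadd (P2 t) (P3 t)))
  (HZ : forall t, Z t = vadd (mtv (Am1 d) (P1 t)) (vadd (mtv (Am2 d) (P2 t)) (mtv (Am3 d) (P3 t))))
  (HW : forall t, W t = vadd (mtv (Bm1 d) (P1 t)) (vadd (mtv (Bm2 d) (P2 t)) (mtv (Bm3 d) (P3 t)))) :
  let sg := sigmaK d p in
  (forall t, g t = v0 /\ G t = v0) /\
  (forall t,
     barmom sg (rf t) (rdot t) (thf t) (Z t) (z t) = (0, sg) /\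
     barmom sg (rf t) (rdot t) (thf t) (W t) (w t) = v0 /\
     barpos sg (rf t) (thf t) (z t) = (sg, 0) /\
     barpos sg (rf t) (thf t) (w t) = v0) /\
  ham_solution (Ham d ecc p) (fun _ => ((0, sg), v0)) (fun _ => ((sg, 0), v0)).
Proof.
  intros sg.
  pose proof (config_facts d Hm1 Hm2 Hm3 Hmsum Hth1 Hth2 Hth3 Hthsum) as CF.
  cbv zeta in CF.
  destruct CF as [Hal [Hs1 [Hs2 [Hs3 [Hal2 [E1x [E1y [D12x [D12y [D13x [D13y [D23x [D23y
     [E2 [E3a [E3b [E4 [E5x E5y]]]]]]]]]]]]]]]]]].
  pose proof (kepler (mu d) ecc p Hecc Hp rf thf rdot thdot vx vy Hrd Hthd Hthpos Hr Hvx Hvy Hax Hay) as HK.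
  assert (Hmup : 0 < mu d * p).
  { destruct (HK 0) as [Hr0 [_ [_ HH]]]. rewrite <- HH. specialize (Hthpos 0).
    apply pow_lt. apply Rmult_lt_0_compat; auto. apply pow_lt; auto. }
  assert (Hsg : 0 < sg) by (unfold sg, sigmaK, Rpower; apply exp_pos).
  assert (Hsg2 : sg ^ 2 = sqrt (mu d * p)).
  { unfold sg, sigmaK. rewrite <- Rpower_pow by (unfold Rpower; apply exp_pos).
    rewrite Rpower_mult, <- Rpower_sqrt by auto. f_equal. simpl. field. }
  assert (Hsg4 : mu d * p = sg ^ 4).
  { replace (sg ^ 4) with ((sg ^ 2) ^ 2) by ring. rewrite Hsg2, pow2_sqrt; lra. }
  assert (Hang : forall t, rf t ^ 2 * thdot t = sg ^ 2).
  { intro t. rewrite Hsg2. destruct (HK t) as [Hr0 [_ [_ HH]]]. rewrite <- HH.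
    symmetry. apply sqrt_lem_1. apply pow_le. apply Rmult_le_pos. apply pow_le; lra. left; auto.
    apply Rmult_le_pos. apply pow_le; lra. left; auto. ring. }
  set (a1x := fst (pa1 d)) in *. set (a1y := snd (pa1 d)) in *.
  set (a2x := fst (pa2 d)) in *. set (a2y := snd (pa2 d)) in *.
  set (a3x := fst (pa3 d)) in *. set (a3y := snd (pa3 d)) in *.
  assert (Htrig : forall x, sin x ^ 2 + cos x ^ 2 = 1).
  { intro x. rewrite <- !Rsqr_pow2. apply sin2_cos2. }
  assert (Hsol : forall t, g t = v0 /\ z t = (rf t * cos (thf t), rf t * sin (thf t)) /\ w t = v0).
  { intro t.
    pose proof (f_equal fst (HQ1 t)) as q1x. pose proof (f_equal snd (HQ1 t)) as q1y.
    pose proof (f_equal fst (HQ2 t)) as q2x. pose proof (f_equal snd (HQ2 t)) as q2y.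
    pose proof (f_equal fst (HQ3 t)) as q3x. pose proof (f_equal snd (HQ3 t)) as q3y.
    unfold qell, vadd, mv, Am1, Am2, Am3, colJ, Bm1, Bm2, Bm3, mscal, I2, Rot, vscal in q1x, q1y, q2x, q2y, q3x, q3y.
    cbn [fst snd a11 a12 a21 a22] in q1x, q1y, q2x, q2y, q3x, q3y.
    rewrite ?cos_neg, ?sin_neg in q3x, q3y.
    fold a1x a1y a2x a2y a3x a3y in q1x, q1y, q2x, q2y, q3x, q3y.
    destruct (solve6 (m1 d) (m2 d) (m3 d) a1x a1y a2x a2y a3x a3y
      (rho1 d * sin (th1 d) / alpha d) (- (rho2 d * sin (th2 d) / alpha d)) (- (rho3 d * sin (th3 d) / alpha d))
      (cos (th2 d)) (sin (th2 d)) (cos (th3 d)) (sin (th3 d))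
      (fst (g t)) (snd (g t)) (fst (z t) - rf t * cos (thf t)) (snd (z t) - rf t * sin (thf t))
      (fst (w t)) (snd (w t)) Hmsum E1x E1y E2 E3a E3b E4 (Htrig _) (Htrig _) E5x E5y)
      as [G1 [G2 [U1 [U2 [W1 W2]]]]]; try lra.
    split; [|split].
    - rewrite (surjective_pairing (g t)), G1, G2. reflexivity.
    - rewrite (surjective_pairing (z t)). f_equal; lra.
    - rewrite (surjective_pairing (w t)), W1, W2. reflexivity. }
  assert (Hqd : forall (a : V2) t v, is_derive2 (qell a rf thf) t v ->
     v = (fst a * vx t - snd a * vy t, snd a * vx t + fst a * vy t)).
  { intros a t v [H1 H2]. destruct (HK t) as [_ [Hvx' [Hvy' _]]].
    rewrite (surjective_pairing v). f_equal.
    - apply (deriv_eq _ t _ _ H1). unfold qell, vscal, mv, Rot; cbn [fst snd a11 a12 a21 a22].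
      auto_derive. repeat split; eexists; eauto.
      rewrite (Dv _ _ _ (Hrd t)), (Dv _ _ _ (Hthd t)), Hvx', Hvy'. ring.
    - apply (deriv_eq _ t _ _ H2). unfold qell, vscal, mv, Rot; cbn [fst snd a11 a12 a21 a22].
      auto_derive. repeat split; eexists; eauto.
      rewrite (Dv _ _ _ (Hrd t)), (Dv _ _ _ (Hthd t)), Hvx', Hvy'. ring. }
  assert (HGZW : forall t, G t = v0 /\ Z t = (vx t, vy t) /\ W t = v0).
  { intro t. destruct (HP1 t) as [v1 [Hv1 EP1]]. destruct (HP2 t) as [v2 [Hv2 EP2]].
    destruct (HP3 t) as [v3 [Hv3 EP3]].
    apply Hqd in Hv1. apply Hqd in Hv2. apply Hqd in Hv3.
    rewrite HG, HZ, HW, EP1, EP2, EP3, Hv1, Hv2, Hv3.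
    unfold vadd, vscal, mtv, Am1, Am2, Am3, colJ, Bm1, Bm2, Bm3, mscal, I2, Rot, v0.
    cbn [fst snd a11 a12 a21 a22]. rewrite ?cos_neg, ?sin_neg.
    fold a1x a1y a2x a2y a3x a3y.
    assert (X1 : vx t * (m1 d * a1x + m2 d * a2x + m3 d * a3x) - vy t * (m1 d * a1y + m2 d * a2y + m3 d * a3y) = 0)
      by (rewrite E1x, E1y; ring).
    assert (X2 : vx t * (m1 d * a1y + m2 d * a2y + m3 d * a3y) + vy t * (m1 d * a1x + m2 d * a2x + m3 d * a3x) = 0)
      by (rewrite E1x, E1y; ring).
    assert (X3 : vx t * (m1 d * (a1x ^ 2 + a1y ^ 2) + m2 d * (a2x ^ 2 + a2y ^ 2) + m3 d * (a3x ^ 2 + a3y ^ 2)) = vx t)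
      by (rewrite E2; ring).
    assert (X4 : vy t * (m1 d * (a1x ^ 2 + a1y ^ 2) + m2 d * (a2x ^ 2 + a2y ^ 2) + m3 d * (a3x ^ 2 + a3y ^ 2)) = vy t)
      by (rewrite E2; ring).
    set (e5x := m1 d * (rho1 d * sin (th1 d) / alpha d) * a1x + m2 d * - (rho2 d * sin (th2 d) / alpha d) * (cos (th3 d) * a2x + sin (th3 d) * a2y) +
       m3 d * - (rho3 d * sin (th3 d) / alpha d) * (cos (th2 d) * a3x - sin (th2 d) * a3y)) in E5x.
    set (e5y := m1 d * (rho1 d * sin (th1 d) / alpha d) * a1y +
       m2 d * - (rho2 d * sin (th2 d) / alpha d) * (- sin (th3 d) * a2x + cos (th3 d) * a2y) +
       m3 d * - (rho3 d * sin (th3 d) / alpha d) * (sin (th2 d) * a3x + cos (th2 d) * a3y)) in E5y.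
    assert (X5 : vx t * e5x - vy t * e5y = 0) by (rewrite E5x, E5y; ring).
    assert (X6 : vx t * e5y + vy t * e5x = 0) by (rewrite E5x, E5y; ring).
    unfold e5x, e5y in X5, X6.
    split; [|split]; f_equal; nra. }
  split.
  { intro t. destruct (Hsol t) as [Eg _]. destruct (HGZW t) as [EG _]. auto. }
  split.
  { intro t. destruct (Hsol t) as [Eg [Ez Ew]]. destruct (HGZW t) as [EG [EZ EW]].
    destruct (HK t) as [Hr0 [Evx [Evy _]]].
    rewrite EZ, Ez, EW, Ew. unfold barmom, barpos, vscal, vsub, mtv, Rot, v0.
    cbn [fst snd a11 a12 a21 a22].
    pose proof (Hang t) as Ha. pose proof (Htrig (thf t)) as Ht.
    repeat split; f_equal.
    - rewrite Evx, Evy. ring.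
    - rewrite Evx, Evy.
      transitivity (/ sg * (rf t ^ 2 * thdot t * (sin (thf t) ^ 2 + cos (thf t) ^ 2))). ring.
      rewrite Ht, Ha. field. lra.
    - ring.
    - ring.
    - transitivity (sg * (/ rf t * rf t) * (sin (thf t) ^ 2 + cos (thf t) ^ 2)). ring.
      rewrite Ht. field. lra.
    - transitivity (sg * / rf t * (rf t * (sin (thf t) * cos (thf t) - cos (thf t) * sin (thf t)))). ring. ring.
    - ring.
    - ring. }
  destruct Hsin as [kk [Sk1 [Sk2 Sk3]]].
  destruct (cbrt_cube _ Hd12) as [C12 P12]. destruct (cbrt_cube _ Hd23) as [C23 P23].
  destruct (cbrt_cube _ Hd31) as [C31 P31].
  assert (Hkk : 0 < kk) by (destruct (Rlt_le_dec 0 kk); auto; nra).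
  set (lam := (alpha d / kk) ^ 3).
  set (l12 := sin (th3 d) / alpha d). set (l13 := sin (th2 d) / alpha d). set (l23 := sin (th1 d) / alpha d).
  assert (Pl12 : 0 < l12) by (apply Rdiv_lt_0_compat; auto).
  assert (Pl13 : 0 < l13) by (apply Rdiv_lt_0_compat; auto).
  assert (Pl23 : 0 < l23) by (apply Rdiv_lt_0_compat; auto).
  assert (Hdd12 : d12 d = lam * l12 ^ 3).
  { rewrite <- C12. replace (cbrt (d12 d)) with (sin (th3 d) / kk) by (rewrite Sk3; field; lra).
    unfold lam, l12. field. split; lra. }
  assert (Hdd31 : d31 d = lam * l13 ^ 3).
  { rewrite <- C31. replace (cbrt (d31 d)) with (sin (th2 d) / kk) by (rewrite Sk2; field; lra).
    unfold lam, l13. field. split; lra. }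
  assert (Hdd23 : d23 d = lam * l23 ^ 3).
  { rewrite <- C23. replace (cbrt (d23 d)) with (sin (th1 d) / kk) by (rewrite Sk1; field; lra).
    unfold lam, l23. field. split; lra. }
  assert (N12 : (a1x - a2x) ^ 2 + (a1y - a2y) ^ 2 = l12 ^ 2).
  { rewrite D12x, D12y. unfold l12.
    transitivity ((sin (th3 d) / alpha d) ^ 2 * (sin (th2 d) ^ 2 + cos (th2 d) ^ 2)).
    field; lra. rewrite Htrig; ring. }
  assert (N13 : (a1x - a3x) ^ 2 + (a1y - a3y) ^ 2 = l13 ^ 2).
  { rewrite D13x, D13y. unfold l13.
    transitivity ((sin (th2 d) / alpha d) ^ 2 * (sin (th3 d) ^ 2 + cos (th3 d) ^ 2)).
    field; lra. rewrite Htrig; ring. }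
  assert (N23 : (a2x - a3x) ^ 2 + (a2y - a3y) ^ 2 = l23 ^ 2).
  { rewrite D23x, D23y. unfold l23. field; lra. }
  assert (Lsum : m1 d * m2 d * l12 ^ 2 + m1 d * m3 d * l13 ^ 2 + m2 d * m3 d * l23 ^ 2 = 1).
  { unfold l12, l13, l23. apply (Rmult_eq_reg_r (alpha d ^ 2)); [|nra].
    transitivity (m2 d * m3 d * sin (th1 d) ^ 2 + m3 d * m1 d * sin (th2 d) ^ 2 + m1 d * m2 d * sin (th3 d) ^ 2).
    field; lra. rewrite <- Hal2; ring. }
  assert (Hmu : mu d = lam).
  { unfold mu. rewrite (vnorm_eq (vsub (pa1 d) (pa2 d)) l12), (vnorm_eq (vsub (pa1 d) (pa3 d)) l13),
      (vnorm_eq (vsub (pa2 d) (pa3 d)) l23); try lra; try (unfold vsub; cbn [fst snd]; fold a1x a1y a2x a2y a3x a3y; assumption).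
    rewrite Hdd12, Hdd31, Hdd23.
    transitivity (lam * (m1 d * m2 d * l12 ^ 2 + m1 d * m3 d * l13 ^ 2 + m2 d * m3 d * l23 ^ 2)).
    field. repeat split; lra. rewrite Lsum. ring. }
  unfold ham_solution. intros th k Hk. exists 0, 0.
  split; [refine (is_derive_const _ _)|]. split; [refine (is_derive_const _ _)|].
  split.
  { destruct k as [|[|[|[|k]]]]; try lia; unfold Ham, set4, coord4, vdot, mv, Jm, v0;
    cbn [fst snd a11 a12 a21 a22]; auto_derive; auto; try ring; lra. }
  cbv beta.
  assert (Hsg0 : sg <> 0) by lra.
  pose proof (Upot_deriv d ((sg, 0), v0) k) as HU. cbv zeta in HU. unfold Am1, Am2, Am3 in HU.
  rewrite !vpair in HU. fold a1x a1y a2x a2y a3x a3y in HU.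
  specialize (HU (PosL _ _ _ _ Hsg Pl12 N12) (PosL _ _ _ _ Hsg Pl13 N13) (PosL _ _ _ _ Hsg Pl23 N23)).
  rewrite (VN _ _ _ _ Hsg Pl12 N12), (VN _ _ _ _ Hsg Pl13 N13), (VN _ _ _ _ Hsg Pl23 N23) in HU.
  rewrite Hdd12, Hdd31, Hdd23 in HU.
  rewrite (term_simpl _ _ _ _ _ _ _ (Rgt_not_eq _ _ Pl12) Hsg0),
    (term_simpl _ _ _ _ _ _ _ (Rgt_not_eq _ _ Pl13) Hsg0),
    (term_simpl _ _ _ _ _ _ _ (Rgt_not_eq _ _ Pl23) Hsg0) in HU.
  set (Uf := fun s => Upot d (fst (set4 ((sg, 0), v0) k s)) (snd (set4 ((sg, 0), v0) k s))) in HU.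
  apply (is_derive_ext (fun s => (vdot (0, sg) (0, sg) + vdot v0 v0) / 2
     + (vdot (fst (set4 ((sg, 0), v0) k s)) (mv Jm (0, sg)) + vdot (snd (set4 ((sg, 0), v0) k s)) (mv Jm v0))
     + (p - rtrue ecc p th) / (2 * p) * (vdot (fst (set4 ((sg, 0), v0) k s)) (fst (set4 ((sg, 0), v0) k s))
                                          + vdot (snd (set4 ((sg, 0), v0) k s)) (snd (set4 ((sg, 0), v0) k s)))
     - rtrue ecc p th / sg * Uf s)).
  { intro s. reflexivity. }
  destruct k as [|[|[|[|k]]]]; try lia;
    cbn [colk msub colJ fst snd a11 a12 a21 a22] in HU;
    unfold Bm1, Bm2, Bm3, mscal, I2, Rot in HU; cbn [fst snd a11 a12 a21 a22] in HU;
    rewrite ?cos_neg, ?sin_neg in HU;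
    fold a1x a1y a2x a2y a3x a3y in HU.
  - assert (HUk : is_derive Uf sg (- (mu d) / sg ^ 2)).
    { eapply is_derive_value; [exact HU|]. rewrite Hmu.
      pose proof (f_equal (fun x => lam / sg ^ 2 * (m1 d * m2 d) * x) N12) as X1.
      pose proof (f_equal (fun x => lam / sg ^ 2 * (m1 d * m3 d) * x) N13) as X2.
      pose proof (f_equal (fun x => lam / sg ^ 2 * (m2 d * m3 d) * x) N23) as X3.
      pose proof (f_equal (fun x => lam / sg ^ 2 * x) Lsum) as X4.
      cbv beta in X1, X2, X3, X4. lra. }
    cbn [set4 fst snd coord4]. unfold vdot, mv, Jm, v0. cbn [fst snd a11 a12 a21 a22].
    auto_derive. exists (- (mu d) / sg ^ 2); exact HUk.
    rewrite (Dv _ _ _ HUk).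
    replace (mu d) with (sg ^ 4 / p) by (rewrite <- Hsg4; field; lra).
    field. split; lra.
  - assert (HUk : is_derive Uf 0 0).
    { eapply is_derive_value; [exact HU|]. ring. }
    cbn [set4 fst snd coord4]. unfold vdot, mv, Jm, v0. cbn [fst snd a11 a12 a21 a22].
    auto_derive. exists 0; exact HUk.
    rewrite (Dv _ _ _ HUk). field. split; lra.
  - assert (HUk : is_derive Uf 0 0).
    { eapply is_derive_value; [exact HU|].
      pose proof (F3gen (m1 d) (m2 d) (m3 d) a1x a1y a2x a2y a3x a3y
        (rho1 d * sin (th1 d) / alpha d) (- (rho2 d * sin (th2 d) / alpha d) * cos (th3 d))
        (- (rho3 d * sin (th3 d) / alpha d) * cos (th2 d))
        0 (- (rho2 d * sin (th2 d) / alpha d) * sin (th3 d)) (- (rho3 d * sin (th3 d) / alpha d) * - sin (th2 d)) Hmsum) as F.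
      rewrite E1x, E1y in F.
      assert (E3a' : m1 d * (rho1 d * sin (th1 d) / alpha d) + m2 d * (- (rho2 d * sin (th2 d) / alpha d) * cos (th3 d))
        + m3 d * (- (rho3 d * sin (th3 d) / alpha d) * cos (th2 d)) = 0) by lra.
      pose proof (f_equal (fun x => lam / sg ^ 2 * x) F) as X1.
      pose proof (f_equal (fun x => lam / sg ^ 2 * x) E5x) as X2.
      cbv beta in X1, X2. lra. }
    cbn [set4 fst snd coord4]. unfold vdot, mv, Jm, v0. cbn [fst snd a11 a12 a21 a22].
    auto_derive. exists 0; exact HUk.
    rewrite (Dv _ _ _ HUk). field. split; lra.
  - assert (HUk : is_derive Uf 0 0).
    { eapply is_derive_value; [exact HU|].
      pose proof (F3gen (m1 d) (m2 d) (m3 d) a1x a1y a2x a2y a3x a3y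
        0 (- (rho2 d * sin (th2 d) / alpha d) * - sin (th3 d))
        (- (rho3 d * sin (th3 d) / alpha d) * - - sin (th2 d))
        (rho1 d * sin (th1 d) / alpha d) (- (rho2 d * sin (th2 d) / alpha d) * cos (th3 d)) (- (rho3 d * sin (th3 d) / alpha d) * cos (th2 d)) Hmsum) as F.
      rewrite E1x, E1y in F.
      pose proof (f_equal (fun x => lam / sg ^ 2 * x) F) as X1.
      pose proof (f_equal (fun x => lam / sg ^ 2 * x) E5y) as X2.
      cbv beta in X1, X2. lra. }
    cbn [set4 fst snd coord4]. unfold vdot, mv, Jm, v0. cbn [fst snd a11 a12 a21 a22].
    auto_derive. exists 0; exact HUk.
    rewrite (Dv _ _ _ HUk). field. split; lra.
Qed.
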